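(* Let $d>0$ and $a\geq 7$ be integers with $\gcd(a,d)=1$, and put $s_n=\frac{n}{2}\,[2a+(n-1)d]$ for $1\leq n\leq 4$, i.e. $s_1=a$, $s_2=2a+d$, $s_3=3a+3d$, $s_4=4a+6d$. Then $\{s_1,s_2,s_3,s_4\}$ is a minimal system of generators of the numerical semigroup $\Gamma_4=\langle s_1,s_2,s_3,s_4\rangle$ (no $s_j$ is a nonnegative integer combination of the others).
   Context: A numerical semigroup is a submonoid of $(\mathbb{N},+)$ with finite complement; it has a unique minimal system of generators. *)

(* Defs.v *)
From mathcomp Require Import all_boot.
Set Implicit Arguments. Unset Strict Implicit. Unset Printing Implicit Defensive.

(* s_n = n/2 * (2a + (n-1)d); the numerator n*(2a+(n-1)d) is always even. *)
Definition sn (a d n : nat) : nat := (n * (2 * a + (n - 1) * d)) %/ 2.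

Definition gens4 (a d : nat) : seq nat := [:: sn a d 1; sn a d 2; sn a d 3; sn a d 4].

Definition in_monoid (G : seq nat) (x : nat) : Prop :=
  exists c : nat -> nat, x = \sum_(i < size G) c i * nth 0 G i.

Definition generates_numerical_semigroup (G : seq nat) : Prop :=
  exists N : nat, forall n : nat, N <= n -> in_monoid G n.

Definition drop_nth (j : nat) (G : seq nat) : seq nat := take j G ++ drop j.+1 G.

Definition minimal_system_of_generators (G : seq nat) : Prop :=
  generates_numerical_semigroup G /\
  (forall j : nat, j < size G -> ~ in_monoid (drop_nth j G) (nth 0 G j)).

(* Main.v *)
Require Import Defs.
From mathcomp Require Import all_boot.
From mathcomp Require Import zify.

Lemma sn1 a d : sn a d 1 = a. Proof. rewrite /sn; lia. Qed.
Lemma sn2 a d : sn a d 2 = 2*a+d. Proof. rewrite /sn; lia. Qed.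
Lemma sn3 a d : sn a d 3 = 3*a+3*d. Proof. rewrite /sn; lia. Qed.
Lemma sn4 a d : sn a d 4 = 4*a+6*d. Proof. rewrite /sn; lia. Qed.

Lemma cancel_key a d p q m1 m2 : 0 < a -> coprime a d -> p < a -> q < a ->
  p * d + m1 * a = q * d + m2 * a -> p = q /\ m1 = m2.
Proof.
move=> a0 cop pa qa.
wlog pq : p q m1 m2 pa qa / p <= q.
  move=> W E; case: (leqP p q) => h; first exact: W.
  have [] := W q p m2 m1 qa pa (ltnW h) (esym E); by [].
move=> E.
have E2 : (q - p) * d = (m1 - m2) * a.
  rewrite mulnBl mulnBl; lia.
have : a %| (q - p) * d by rewrite E2 dvdn_mull.
rewrite mulnC Gauss_dvdr // => Hd.
case: (posnP (q - p)) => [h0|hp]; last by have := dvdn_leq hp Hd; lia.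
have pe : p = q by lia.
split=> //; subst p.
have : m1 * a = m2 * a by lia.
by move/eqP; rewrite eqn_pmul2r // => /eqP.
Qed.

Lemma frob a b n : 0 < a -> coprime b a -> a * b <= n ->
  exists x y, n = x * a + y * b.
Proof.
move=> a0 cop nab.
case: (posnP b) => [b0|b0].
  move: cop; rewrite b0 /coprime gcd0n => /eqP a1.
  by subst a; exists n, 0; lia.
case: (egcdnP a b0) => km kn Ek _.
move: Ek; rewrite (eqP cop) => Ek.
set y := (n * km) %% a.
have ya : y < a by rewrite ltn_mod.
have yb : y * b <= n.
  by apply: leq_trans nab; rewrite leq_mul2r (ltnW ya) orbT.
have ym : y * b = n %[mod a].
  by rewrite /y modnMml -mulnA Ek mulnDr muln1 mulnA modnMDl.
have Hd : a %| n - y * b.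
  rewrite -(eqn_mod_dvd _ yb); apply/eqP; by rewrite ym.
have H := divnK Hd.
exists ((n - y * b) %/ a), y; lia.
Qed.

Lemma small y B s0 k : y * B <= s0 -> s0 < k * B -> y < k.
Proof.
move=> h1 h2; have h3 : y * B < k * B := leq_ltn_trans h1 h2.
by move: h3; rewrite ltn_mul2r => /andP [].
Qed.

Theorem theorem2p1 (a d : nat) :
  0 < d -> 7 <= a -> coprime a d ->
  minimal_system_of_generators (gens4 a d).
Proof.
move=> d0 a7 cop; split.
  exists (a * (2*a+d)) => n hn.
  have cop2 : coprime (2*a+d) a.
    by rewrite coprime_sym /coprime gcdnMDl.
  have [x [y E]] := @frob a (2*a+d) n (leq_trans (isT : 0 < 7) a7) cop2 hn.
  exists (fun i => if i == 0 then x else if i == 1 then y else 0).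
  rewrite /gens4 /= !big_ord_recr big_ord0 /= sn1 sn2 !mul0n !addn0 add0n; exact: E.
have a0 : 0 < a by lia.
move=> j; rewrite /gens4 /=.
case: j => [|[|[|[|j]]]] // _ [c];
  rewrite /Defs.drop_nth /= !big_ord_recr big_ord0 /= ?sn1 ?sn2 ?sn3 ?sn4;
  set x := c 0; set y := c 1; set z := c 2; clearbody x y z; move=> E.
- have hx : x < 1 by apply: (@small x (2*a+d) (a) 1); [apply: (leq_trans _ (eq_leq (esym E))); rewrite -!addnA add0n; exact: leq_addr | lia].
  have hy : y < 1 by apply: (@small y (3*a+3*d) (a) 1); [apply: (leq_trans _ (eq_leq (esym E))); rewrite add0n -addnA; exact: leq_trans (leq_addr _ _) (leq_addl _ _) | lia].
  have hz : z < 1 by apply: (@small z (4*a+6*d) (a) 1); [apply: (leq_trans _ (eq_leq (esym E))); exact: leq_addl | lia].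
  have x0 : x = 0 by lia.
  have y0 : y = 0 by lia.
  have z0 : z = 0 by lia.
  move: E; rewrite x0 y0 z0; lia.
- have hy : y < 1 by apply: (@small y (3*a+3*d) (2*a+d) 1); [apply: (leq_trans _ (eq_leq (esym E))); rewrite add0n -addnA; exact: leq_trans (leq_addr _ _) (leq_addl _ _) | lia].
  have hz : z < 1 by apply: (@small z (4*a+6*d) (2*a+d) 1); [apply: (leq_trans _ (eq_leq (esym E))); exact: leq_addl | lia].
  have y0 : y = 0 by lia.
  have z0 : z = 0 by lia.
  have [] := @cancel_key a d 1 0 2 x a0 cop (leq_ltn_trans (isT : 1 <= 6) a7) a0.
    move: E; rewrite y0 z0; lia.
  by [].
- have hy : y < 4 by apply: (@small y (2*a+d) (3*a+3*d) 4); [apply: (leq_trans _ (eq_leq (esym E))); rewrite add0n -addnA; exact: leq_trans (leq_addr _ _) (leq_addl _ _) | lia].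
  have hz : z < 1 by apply: (@small z (4*a+6*d) (3*a+3*d) 1); [apply: (leq_trans _ (eq_leq (esym E))); exact: leq_addl | lia].
  have z0 : z = 0 by lia.
  have [] := @cancel_key a d 3 y 3 (x + 2*y) a0 cop (leq_ltn_trans (isT : 3 <= 6) a7) (leq_trans hy (leq_trans (isT : 4 <= 7) a7)).
    move: E; rewrite z0; lia.
  lia.
- have hy : y < 6 by apply: (@small y (2*a+d) (4*a+6*d) 6); [apply: (leq_trans _ (eq_leq (esym E))); rewrite add0n -addnA; exact: leq_trans (leq_addr _ _) (leq_addl _ _) | lia].
  have hz : z < 3 by apply: (@small z (3*a+3*d) (4*a+6*d) 3); [apply: (leq_trans _ (eq_leq (esym E))); exact: leq_addl | lia].
  have xa := leq0n (x * a).
  have H : y + 3 * z <= 6.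
    move: hy hz E; case: y => [|[|[|[|[|[|y]]]]]] //; case: z => [|[|[|z]]] //; lia.
  have [] := @cancel_key a d 6 (y+3*z) 4 (x+2*y+3*z) a0 cop a7 (leq_ltn_trans H a7).
    lia.
  lia.
Qed.
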